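(* The variety of superintegrable systems $\mathcal V\subset\mathbb P^9$ (points satisfying the five Plücker relations and the superintegrability conditions (SIC)) coincides with the subvariety of $\mathbb P^9$ defined by the polynomial identities $A_zB_w=D_zD_w-DD_{zw}$, $A_zD_{ww}=D_wD_{zz}-DD_{zzw}$, $A_zD_{wwz}=D_{zz}D_{zw}-D_zD_{zzw}$, $B_wD_{zz}=D_zD_{ww}-DD_{wwz}$, $B_wD_{zzw}=D_{zw}D_{ww}-D_wD_{wwz}$, together with $A_zD_w^2=2DD_wD_{zz}-\tfrac32D^2D_{zzw}-D_wD_z^2+DD_zD_{zw}$ and $B_wD_z^2=2DD_zD_{ww}-\tfrac32D^2D_{wwz}-D_zD_w^2+DD_wD_{zw}$.
   Context: Homogeneous coordinates $a_{ij}$ ($i,j\ge0$, $i+j\le3$) on $\mathbb P^9$, which correspond to skew-symmetric $5\times5$ matrices with rows $(0,a_{30},a_{20},a_{10},a_{00})$, $(\cdot,0,a_{21},a_{11},a_{01})$, $(\cdot,\cdot,0,a_{12},a_{02})$, $(\cdot,\cdot,\cdot,0,a_{03})$. Define $D(z,w)=\sum_{0\le i,j\le2,(i,j)\ne(2,2)}a_{ij}z^iw^j$, $A_z(w)=a_{21}w^2+2a_{20}w+a_{30}$, $B_w(z)=a_{12}z^2+2a_{02}z+a_{03}$ (names of polynomials; subscripts on $D$ are partial derivatives). Plücker relations: $a_{03}a_{21}-a_{02}a_{11}+a_{01}a_{12}=0$, $a_{03}a_{20}-a_{02}a_{10}+a_{00}a_{12}=0$, $a_{03}a_{30}-a_{01}a_{10}+a_{00}a_{11}=0$,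 $a_{02}a_{30}-a_{01}a_{20}+a_{00}a_{21}=0$, $a_{12}a_{30}-a_{11}a_{20}+a_{10}a_{21}=0$. (SIC): the polynomial identities $3A_zDD_{ww}-2A_zB_wD_z-2A_zD_w^2+DD_wD_{zz}=0$, $3B_wDD_{zz}-2A_zB_wD_w-2B_wD_z^2+DD_zD_{ww}=0$, $2D^2D_{zz}D_{ww}-B_wDD_zD_{zz}-A_zDD_wD_{ww}-A_zB_wD_zD_w+A_z^2B_w^2=0$. All identities are in $\mathbb C[z,w]$, each coefficient giving a homogeneous equation in the $a_{ij}$. *)

(* Defs.v *)
From HB Require Import structures.
From mathcomp Require Import all_boot all_order all_algebra all_field.
From mathcomp Require Import mpoly.
Set Implicit Arguments. Unset Strict Implicit. Unset Printing Implicit Defensive.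
Import Order.TTheory GRing.Theory Num.Theory.
Local Open Scope ring_scope.

(* Complex numbers: algC (algebraic closure of Q, an algebraically closed field of characteristic 0). *)
(* Homogeneous coordinates: a i j stands for a_{ij}; only i,j >= 0, i+j <= 3 are used. *)
Definition coords := nat -> nat -> algC.

Notation P := {mpoly algC[2]}.
Definition vz : 'I_2 := ord0.
Definition vw : 'I_2 := ord_max.
Definition Z : P := 'X_vz.
Definition W : P := 'X_vw.
Definition dz (p : P) : P := mderiv vz p.
Definition dw (p : P) : P := mderiv vw p.

Definition Dpol (a : coords) : P :=
  \sum_(i < 3) \sum_(j < 3 | ~~ ((i == 2%N :> nat) && (j == 2%N :> nat)))
     (a i j)%:MP * Z ^+ i * W ^+ j.

Definition Apol (a : coords) : P := (a 2 1)%:MP * W ^+ 2 + 2%:R * (a 2 0)%:MP * W + (a 3 0)%:MP.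
Definition Bpol (a : coords) : P := (a 1 2)%:MP * Z ^+ 2 + 2%:R * (a 0 2)%:MP * Z + (a 0 3)%:MP.

Definition plucker (a : coords) : Prop :=
  [/\ a 0 3 * a 2 1 - a 0 2 * a 1 1 + a 0 1 * a 1 2 = 0,
      a 0 3 * a 2 0 - a 0 2 * a 1 0 + a 0 0 * a 1 2 = 0,
      a 0 3 * a 3 0 - a 0 1 * a 1 0 + a 0 0 * a 1 1 = 0,
      a 0 2 * a 3 0 - a 0 1 * a 2 0 + a 0 0 * a 2 1 = 0 &
      a 1 2 * a 3 0 - a 1 1 * a 2 0 + a 1 0 * a 2 1 = 0].

Definition SIC (a : coords) : Prop :=
  let D := Dpol a in let A := Apol a in let B := Bpol a in
  [/\ 3%:R * A * D * dw (dw D) - 2%:R * A * B * dz D - 2%:R * A * (dw D) ^+ 2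
        + D * dw D * dz (dz D) = 0,
      3%:R * B * D * dz (dz D) - 2%:R * A * B * dw D - 2%:R * B * (dz D) ^+ 2
        + D * dz D * dw (dw D) = 0 &
      2%:R * D ^+ 2 * dz (dz D) * dw (dw D) - B * D * dz D * dz (dz D)
        - A * D * dw D * dw (dw D) - A * B * dz D * dw D + A ^+ 2 * B ^+ 2 = 0].

Definition cor38_eqs (a : coords) : Prop :=
  let D := Dpol a in let A := Apol a in let B := Bpol a in
  let Dz := dz D in let Dw := dw D in
  let Dzz := dz Dz in let Dww := dw Dw in let Dzw := dw Dz in
  let Dzzw := dw Dzz in let Dwwz := dz Dww in
  [/\ A * B = Dz * Dw - D * Dzw,
      A * Dww = Dw * Dzz - D * Dzzw,
      A * Dwwz = Dzz * Dzw - Dz * Dzzw,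
      B * Dzz = Dz * Dww - D * Dwwz &
      B * Dzzw = Dzw * Dww - Dw * Dwwz] /\
  (A * Dw ^+ 2 = 2%:R * D * Dw * Dzz - (3%:R / 2%:R)%:MP * D ^+ 2 * Dzzw
                    - Dw * Dz ^+ 2 + D * Dz * Dzw /\
      B * Dz ^+ 2 = 2%:R * D * Dz * Dww - (3%:R / 2%:R)%:MP * D ^+ 2 * Dwwz
                    - Dz * Dw ^+ 2 + D * Dw * Dzw).

(* Main.v *)
Require Import Defs.
From HB Require Import structures.
From mathcomp Require Import all_boot all_order all_algebra all_field.
From mathcomp Require Import mpoly.
From mathcomp Require Import ring.
Import GRing.Theory Num.Theory.
Local Open Scope ring_scope.

Lemma dX (i j : 'I_2) : mderiv i ('X_j : P) = (i == j)%:R.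
Proof. rewrite mderivX mnm1E; case: (eqVneq i j) => [->|ne]; last by rewrite scale0r. have ->: (U_(j) - U_(j) = 0)%MM by apply/mnmP=> k; rewrite !mnmE subnn. by rewrite scale1r mpolyX0.
Qed.
Lemma dzZ : dz Z = 1. Proof. by rewrite /dz /Z dX eqxx. Qed.
Lemma dzW : dz W = 0. Proof. by rewrite /dz /W dX. Qed.
Lemma dwZ : dw Z = 0. Proof. by rewrite /dw /Z dX. Qed.
Lemma dwW : dw W = 1. Proof. by rewrite /dw /W dX eqxx. Qed.
Lemma dzD (p q : P) : dz (p + q) = dz p + dz q. Proof. exact: mderivD. Qed.
Lemma dwD (p q : P) : dw (p + q) = dw p + dw q. Proof. exact: mderivD. Qed.
Lemma dzB (p q : P) : dz (p - q) = dz p - dz q. Proof. exact: mderivB. Qed.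
Lemma dwB (p q : P) : dw (p - q) = dw p - dw q. Proof. exact: mderivB. Qed.
Lemma dzM (p q : P) : dz (p * q) = dz p * q + p * dz q. Proof. exact: mderivM. Qed.
Lemma dwM (p q : P) : dw (p * q) = dw p * q + p * dw q. Proof. exact: mderivM. Qed.
Lemma dzC (c : algC) : dz c%:MP = 0. Proof. exact: mderivC. Qed.
Lemma dwC (c : algC) : dw c%:MP = 0. Proof. exact: mderivC. Qed.
Lemma dzN (n : nat) : dz n%:R = 0. Proof. by rewrite -mpolyC_nat dzC. Qed.
Lemma dwN (n : nat) : dw n%:R = 0. Proof. by rewrite -mpolyC_nat dwC. Qed.
Lemma dzO (p : P) : dz (- p) = - dz p. Proof. exact: mderivN. Qed.
Lemma dwO (p : P) : dw (- p) = - dw p. Proof. exact: mderivN. Qed.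
Lemma dz0 : dz 0 = 0. Proof. exact: mderiv0. Qed.
Lemma dw0 : dw 0 = 0. Proof. exact: mderiv0. Qed.

Notation xc a i j := ((a i j)%:MP : P).

Ltac dsimp := rewrite ?(dzD, dwD, dzB, dwB, dzM, dwM, dzC, dwC, dzN, dwN, dzZ, dzW, dwZ, dwW, dzO, dwO).

Section Expl.
Variable a : coords.
Lemma DE : Dpol a = xc a 0 0 + xc a 0 1 * W + xc a 0 2 * W * W + xc a 1 0 * Z + xc a 1 1 * Z * W
  + xc a 1 2 * Z * W * W + xc a 2 0 * Z * Z + xc a 2 1 * Z * Z * W.
Proof.
rewrite /Dpol; under eq_bigr do rewrite big_mkcond.
rewrite !big_ord_recr !big_ord0 /=.
rewrite !expr0 !expr1 !expr2 !add0r. ring.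
Qed.
Lemma AE : Apol a = xc a 2 1 * W * W + 2%:R * xc a 2 0 * W + xc a 3 0.
Proof. rewrite /Apol expr2; ring. Qed.
Lemma BE : Bpol a = xc a 1 2 * Z * Z + 2%:R * xc a 0 2 * Z + xc a 0 3.
Proof. rewrite /Bpol expr2; ring. Qed.
Lemma DzE : dz (Dpol a) = xc a 1 0 + xc a 1 1 * W + xc a 1 2 * W * W + 2%:R * xc a 2 0 * Z + 2%:R * xc a 2 1 * Z * W.
Proof. rewrite DE; dsimp; ring. Qed.
Lemma DwE : dw (Dpol a) = xc a 0 1 + 2%:R * xc a 0 2 * W + xc a 1 1 * Z + 2%:R * xc a 1 2 * Z * W + xc a 2 1 * Z * Z.
Proof. rewrite DE; dsimp; ring. Qed.
Lemma DzzE : dz (dz (Dpol a)) = 2%:R * xc a 2 0 + 2%:R * xc a 2 1 * W.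
Proof. rewrite DzE; dsimp; ring. Qed.
Lemma DzwE : dw (dz (Dpol a)) = xc a 1 1 + 2%:R * xc a 1 2 * W + 2%:R * xc a 2 1 * Z.
Proof. rewrite DzE; dsimp; ring. Qed.
Lemma DwwE : dw (dw (Dpol a)) = 2%:R * xc a 0 2 + 2%:R * xc a 1 2 * Z.
Proof. rewrite DwE; dsimp; ring. Qed.
Lemma DzzwE : dw (dz (dz (Dpol a))) = 2%:R * xc a 2 1.
Proof. rewrite DzzE; dsimp; ring. Qed.
Lemma DwwzE : dz (dw (dw (Dpol a))) = 2%:R * xc a 1 2.
Proof. rewrite DwwE; dsimp; ring. Qed.
End Expl.

Definition pl1 (a : coords) := a 0 3 * a 2 1 - a 0 2 * a 1 1 + a 0 1 * a 1 2.
Definition pl2 (a : coords) := a 0 3 * a 2 0 - a 0 2 * a 1 0 + a 0 0 * a 1 2.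
Definition pl3 (a : coords) := a 0 3 * a 3 0 - a 0 1 * a 1 0 + a 0 0 * a 1 1.
Definition pl4 (a : coords) := a 0 2 * a 3 0 - a 0 1 * a 2 0 + a 0 0 * a 2 1.
Definition pl5 (a : coords) := a 1 2 * a 3 0 - a 1 1 * a 2 0 + a 1 0 * a 2 1.

Ltac expl := rewrite ?DzzwE ?DwwzE ?DzzE ?DzwE ?DwwE ?DzE ?DwE ?DE ?AE ?BE.

Section Conc.
Variable a : coords.
Let D := Dpol a.
Lemma C1E : Apol a * Bpol a - (dz D * dw D - D * dw (dz D)) = (pl3 a)%:MP + 2%:R*(pl2 a)%:MP * W
   + (pl1 a)%:MP*W*W + 2%:R*(pl4 a)%:MP*Z + (pl5 a)%:MP*Z*Z.
Proof. rewrite /D /pl1 /pl2 /pl3 /pl4 /pl5; expl; ring. Qed.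
Lemma C2E : Apol a * dw (dw D) - (dw D * dz (dz D) - D * dw (dz (dz D))) = 2%:R*(pl4 a)%:MP + 2%:R*(pl5 a)%:MP*Z.
Proof. rewrite /D /pl1 /pl2 /pl3 /pl4 /pl5; expl; ring. Qed.
Lemma C3E : Apol a * dz (dw (dw D)) - (dz (dz D) * dw (dz D) - dz D * dw (dz (dz D))) = 2%:R*(pl5 a)%:MP.
Proof. rewrite /D /pl1 /pl2 /pl3 /pl4 /pl5; expl; ring. Qed.
Lemma C4E : Bpol a * dz (dz D) - (dz D * dw (dw D) - D * dz (dw (dw D))) = 2%:R*(pl2 a)%:MP + 2%:R*(pl1 a)%:MP*W.
Proof. rewrite /D /pl1 /pl2 /pl3 /pl4 /pl5; expl; ring. Qed.
Lemma C5E : Bpol a * dw (dz (dz D)) - (dw (dz D) * dw (dw D) - dw D * dz (dw (dw D))) = 2%:R*(pl1 a)%:MP.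
Proof. rewrite /D /pl1 /pl2 /pl3 /pl4 /pl5; expl; ring. Qed.

Lemma dE6E (c : algC) :
  let A := Apol a in let Dz := dz D in let Dw := dw D in let Dzz := dz Dz in
  let Dww := dw Dw in let Dzw := dw Dz in let Dzzw := dw Dzz in let Dwwz := dz Dww in
  let C := (c%:MP : P) in
  dw (A * Dw ^+ 2 - (2%:R * D * Dw * Dzz - C * D ^+ 2 * Dzzw - Dw * Dz ^+ 2 + D * Dz * Dzw))
  = Dzz * Dw ^+ 2 + 2%:R * A * Dw * Dww
    - (2%:R * (Dw * Dw * Dzz + D * Dww * Dzz + D * Dw * Dzzw) - C * (2%:R * D * Dw * Dzzw)
       - (Dww * Dz ^+ 2 + 2%:R * Dw * Dz * Dzw) + (Dw * Dz * Dzw + D * Dzw * Dzw + D * Dz * Dwwz)).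
Proof. rewrite /D /=; rewrite !expr2; expl; dsimp; ring. Qed.
End Conc.

Lemma two_neq : (2%:R : P) != 0.
Proof. by rewrite -mpolyC_nat mpolyC_eq0 pnatr_eq0. Qed.
Lemma half2 (x : P) : 2%:R * x = 0 -> x = 0.
Proof. by move/eqP; rewrite mulf_eq0 (negbTE two_neq) /= => /eqP. Qed.
Lemma hc : (2%:R : P) * (3%:R / 2%:R : algC)%:MP = 3%:R.
Proof.
rewrite -mpolyC_nat -rmorphM -mpolyC_nat; congr (_%:MP).
rewrite mulrC divfK //; by rewrite pnatr_eq0.
Qed.

Set Implicit Arguments.
Section Abs.
Variables (A B D Dz Dw Dzz Dww Dzw Dzzw Dwwz c : P).
Hypothesis hc : 2%:R * c = 3%:R.

Lemma S1fwd : A * B = Dz * Dw - D * Dzw -> A * Dww = Dw * Dzz - D * Dzzw ->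
  3%:R * A * D * Dww - 2%:R * A * B * Dz - 2%:R * A * Dw ^+ 2 + D * Dw * Dzz = 0 ->
  A * Dw ^+ 2 = 2%:R * D * Dw * Dzz - c * D ^+ 2 * Dzzw - Dw * Dz ^+ 2 + D * Dz * Dzw.
Proof.
move=> h1 h2 hs; apply/eqP; rewrite -subr_eq0; apply/eqP; apply: half2.
transitivity (3%:R * D * (A * Dww - (Dw * Dzz - D * Dzzw)) - 2%:R * Dz * (A * B - (Dz * Dw - D * Dzw))
   - (3%:R * A * D * Dww - 2%:R * A * B * Dz - 2%:R * A * Dw ^+ 2 + D * Dw * Dzz) + (2%:R * c - 3%:R) * D ^+ 2 * Dzzw).
  ring.
by rewrite h1 h2 hs hc !subrr !mulr0 !mul0r !subr0 addr0.
Qed.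

Lemma S2fwd : A * B = Dz * Dw - D * Dzw -> B * Dzz = Dz * Dww - D * Dwwz ->
  3%:R * B * D * Dzz - 2%:R * A * B * Dw - 2%:R * B * Dz ^+ 2 + D * Dz * Dww = 0 ->
  B * Dz ^+ 2 = 2%:R * D * Dz * Dww - c * D ^+ 2 * Dwwz - Dz * Dw ^+ 2 + D * Dw * Dzw.
Proof.
move=> h1 h2 hs; apply/eqP; rewrite -subr_eq0; apply/eqP; apply: half2.
transitivity (3%:R * D * (B * Dzz - (Dz * Dww - D * Dwwz)) - 2%:R * Dw * (A * B - (Dz * Dw - D * Dzw))
   - (3%:R * B * D * Dzz - 2%:R * A * B * Dw - 2%:R * B * Dz ^+ 2 + D * Dz * Dww) + (2%:R * c - 3%:R) * D ^+ 2 * Dwwz).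
  ring.
by rewrite h1 h2 hs hc !subrr !mulr0 !mul0r !subr0 addr0.
Qed.

Lemma S1bwd : A * B = Dz * Dw - D * Dzw -> A * Dww = Dw * Dzz - D * Dzzw ->
  A * Dw ^+ 2 = 2%:R * D * Dw * Dzz - c * D ^+ 2 * Dzzw - Dw * Dz ^+ 2 + D * Dz * Dzw ->
  3%:R * A * D * Dww - 2%:R * A * B * Dz - 2%:R * A * Dw ^+ 2 + D * Dw * Dzz = 0.
Proof.
move=> h1 h2 h6.
transitivity (3%:R * D * (A * Dww - (Dw * Dzz - D * Dzzw)) - 2%:R * Dz * (A * B - (Dz * Dw - D * Dzw))
   - 2%:R * (A * Dw ^+ 2 - (2%:R * D * Dw * Dzz - c * D ^+ 2 * Dzzw - Dw * Dz ^+ 2 + D * Dz * Dzw)) + (2%:R * c - 3%:R) * D ^+ 2 * Dzzw); last by rewrite h1 h2 h6 hc !subrr !mulr0 !mul0r !subr0 addr0.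
ring.
Qed.

Lemma S2bwd : A * B = Dz * Dw - D * Dzw -> B * Dzz = Dz * Dww - D * Dwwz ->
  B * Dz ^+ 2 = 2%:R * D * Dz * Dww - c * D ^+ 2 * Dwwz - Dz * Dw ^+ 2 + D * Dw * Dzw ->
  3%:R * B * D * Dzz - 2%:R * A * B * Dw - 2%:R * B * Dz ^+ 2 + D * Dz * Dww = 0.
Proof.
move=> h1 h2 h6.
transitivity (3%:R * D * (B * Dzz - (Dz * Dww - D * Dwwz)) - 2%:R * Dw * (A * B - (Dz * Dw - D * Dzw))
   - 2%:R * (B * Dz ^+ 2 - (2%:R * D * Dz * Dww - c * D ^+ 2 * Dwwz - Dz * Dw ^+ 2 + D * Dw * Dzw)) + (2%:R * c - 3%:R) * D ^+ 2 * Dwwz); last by rewrite h1 h2 h6 hc !subrr !mulr0 !mul0r !subr0 addr0.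
ring.
Qed.

Lemma S3bwd : A * B = Dz * Dw - D * Dzw -> A * Dww = Dw * Dzz - D * Dzzw ->
  B * Dzz = Dz * Dww - D * Dwwz ->
  Dzz * Dw ^+ 2 + 2%:R * A * Dw * Dww
    - (2%:R * (Dw * Dw * Dzz + D * Dww * Dzz + D * Dw * Dzzw) - c * (2%:R * D * Dw * Dzzw)
       - (Dww * Dz ^+ 2 + 2%:R * Dw * Dz * Dzw) + (Dw * Dz * Dzw + D * Dzw * Dzw + D * Dz * Dwwz)) = 0 ->
  2%:R * D ^+ 2 * Dzz * Dww - B * D * Dz * Dzz - A * D * Dw * Dww - A * B * Dz * Dw + A ^+ 2 * B ^+ 2 = 0.
Proof.
move=> h1 h2 h4 hd.
set dE := (X in X = 0) in hd.
transitivity (D * (2%:R * Dw * (A * Dww - (Dw * Dzz - D * Dzzw)) - dE)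
   + (A * B - D * Dzw) * (A * B - (Dz * Dw - D * Dzw)) - D * Dw * (A * Dww - (Dw * Dzz - D * Dzzw))
   - D * Dz * (B * Dzz - (Dz * Dww - D * Dwwz)) - (3%:R - 2%:R * c) * D ^+ 2 * Dw * Dzzw); last by rewrite h1 h2 h4 hd hc !subrr !mulr0 !mul0r !subr0 ?mulr0 ?addr0.
rewrite /dE; ring.
Qed.
End Abs.

Lemma polyC0E (x : algC) : (x%:MP : P) = 0 -> x = 0.
Proof. by move/eqP; rewrite mpolyC_eq0 => /eqP. Qed.

Theorem corollary3p8 (a : coords) : plucker a /\ SIC a <-> cor38_eqs a.
Proof.
split.
- case=> [[p1 p2 p3 p4 p5] [s1 s2 s3]].
  have e1 : Apol a * Bpol a = dz (Dpol a) * dw (Dpol a) - Dpol a * dw (dz (Dpol a)).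
    apply/eqP; rewrite -subr_eq0 C1E.
    rewrite [pl1 a]p1 [pl2 a]p2 [pl3 a]p3 [pl4 a]p4 [pl5 a]p5 !rmorph0; apply/eqP; ring.
  have e2 : Apol a * dw (dw (Dpol a)) = dw (Dpol a) * dz (dz (Dpol a)) - Dpol a * dw (dz (dz (Dpol a))).
    apply/eqP; rewrite -subr_eq0 C2E.
    rewrite [pl4 a]p4 [pl5 a]p5 !rmorph0; apply/eqP; ring.
  have e3 : Apol a * dz (dw (dw (Dpol a))) = dz (dz (Dpol a)) * dw (dz (Dpol a)) - dz (Dpol a) * dw (dz (dz (Dpol a))).
    apply/eqP; rewrite -subr_eq0 C3E.
    rewrite [pl5 a]p5 !rmorph0; apply/eqP; ring.
  have e4 : Bpol a * dz (dz (Dpol a)) = dz (Dpol a) * dw (dw (Dpol a)) - Dpol a * dz (dw (dw (Dpol a))).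
    apply/eqP; rewrite -subr_eq0 C4E.
    rewrite [pl1 a]p1 [pl2 a]p2 !rmorph0; apply/eqP; ring.
  have e5 : Bpol a * dw (dz (dz (Dpol a))) = dw (dz (Dpol a)) * dw (dw (Dpol a)) - dw (Dpol a) * dz (dw (dw (Dpol a))).
    apply/eqP; rewrite -subr_eq0 C5E.
    rewrite [pl1 a]p1 !rmorph0; apply/eqP; ring.
  split; first by split.
  split.
    exact: (S1fwd hc e1 e2 s1).
  exact: (S2fwd hc e1 e4 s2).
- case=> [[e1 e2 e3 e4 e5] [e6 e7]].
  have q1 : pl1 a = 0.
    apply: polyC0E; apply: half2; rewrite -C5E e5; exact: subrr.
  have q5 : pl5 a = 0.
    apply: polyC0E; apply: half2; rewrite -C3E e3; exact: subrr.
  have q4 : pl4 a = 0.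
    apply: polyC0E; apply: half2; have := C2E a; rewrite e2 subrr q5 rmorph0 mulr0 mul0r addr0.
    by move/esym.
  have q2 : pl2 a = 0.
    apply: polyC0E; apply: half2; have := C4E a; rewrite e4 subrr q1 rmorph0 mulr0 mul0r addr0.
    by move/esym.
  have q3 : pl3 a = 0.
    apply: polyC0E; have := C1E a; rewrite e1 subrr q1 q2 q4 q5 !rmorph0 !mulr0 !mul0r !addr0.
    by move/esym.
  split; first by split.
  have hd := dE6E a (3%:R / 2%:R); cbv zeta in hd.
  rewrite e6 subrr dw0 in hd.
  split.
  + exact: (S1bwd hc e1 e2 e6).
  + exact: (S2bwd hc e1 e4 e7).
  + exact: (S3bwd hc e1 e2 e4 (esym hd)).
Qed.
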